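(* Let $\ell\ge 2$. There exist constants $C=C(\ell)$ and $c=c(\ell)>0$ such that the following holds. If $G$ is an $n$-vertex clean graph with average degree $d\ge Cn^{1/2}$, then the total weight of copies of $P_{\ell+1}^{\square}$ in $G$ is at least $c\,n\,d^{\ell+1}$.
   Context: An $n$-vertex graph $H$ with average degree $d$ is clean if for every edge $uv\in E(H)$, $u$ has at least $d/16$ neighbours $w$ in $H$ with $d_H(v,w)\ge \frac{d^2}{128n}$, where $d_H(v,w)$ is the number of common neighbours of $v,w$. A copy of $P_{\ell+1}^{\square}$ in $G$ is a tuple of distinct vertices $(x_0,\dots,x_\ell,y_0,\dots,y_\ell)$ with $x_iy_i\in E(G)$ for $0\le i\le\ell$ and $x_{i-1}x_i,\ y_{i-1}y_i\in E(G)$ for $1\le i\le \ell$. Its weight is $1/\prod_{i=1}^{\ell}\max\big(d_G(x_{i-1},y_i),\frac{d^2}{n}\big)$. *)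

(* Defs.v *)
From HB Require Import structures.
From mathcomp Require Import all_boot all_order all_algebra.
From mathcomp Require Import reals Rstruct.
Set Implicit Arguments. Unset Strict Implicit. Unset Printing Implicit Defensive.
Import Order.TTheory GRing.Theory Num.Theory.
Local Open Scope ring_scope.

Notation RealR := Rdefinitions.R.

Section Graph.
Variables (T : finType) (e : rel T).

Definition simple_graph : Prop := symmetric e /\ irreflexive e.

Definition deg (x : T) : nat := #|[set y | e x y]|.

Definition codeg (v w : T) : nat := #|[set z | e v z && e w z]|.

(* average degree d = (sum of degrees) / n  (= 0 when n = 0) *)
Definition avgdeg : RealR := ((\sum_(x : T) deg x)%N)%:R / (#|T|%:R).

Definition clean : Prop :=
  forall u v : T, e u v ->
    avgdeg / 16%:R <=
    (#|[set w | e u w &&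
        (avgdeg ^+ 2 / (128%:R * #|T|%:R) <= (codeg v w)%:R)]|)%:R.

(* a copy of the ladder P_{l+1}^square: (x_0..x_l, y_0..y_l) pairwise distinct,
   x_i y_i edges, x_{i-1} x_i and y_{i-1} y_i edges *)
Definition ladder_copy (l : nat) (x y : {ffun 'I_l.+1 -> T}) : bool :=
  [&& [forall i, forall j, (i != j) ==> (x i != x j)],
      [forall i, forall j, (i != j) ==> (y i != y j)],
      [forall i, forall j, x i != y j],
      [forall i, e (x i) (y i)] &
      [forall i : 'I_l, e (x (inord i)) (x (inord i.+1)) &&
                        e (y (inord i)) (y (inord i.+1))]].

Definition ladder_weight (l : nat) (x y : {ffun 'I_l.+1 -> T}) : RealR :=
  (\prod_(i < l)
     Num.max ((codeg (x (inord i)) (y (inord i.+1)))%:R : RealR)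
             (avgdeg ^+ 2 / #|T|%:R)) ^-1.

Definition total_ladder_weight (l : nat) : RealR :=
  \sum_(p : {ffun 'I_l.+1 -> T} * {ffun 'I_l.+1 -> T} | ladder_copy p.1 p.2)
     ladder_weight p.1 p.2.

End Graph.

(* Main.v *)
Require Import Defs.
From HB Require Import structures.
From mathcomp Require Import all_boot all_order all_algebra.
From mathcomp Require Import reals Rstruct.
From mathcomp Require Import ring lra zify.
Import Order.TTheory GRing.Theory Num.Theory.
Local Open Scope ring_scope.
Set Implicit Arguments. Unset Strict Implicit.

Notation RR := Rdefinitions.R.

Lemma sum_inj_le (I J : finType) (P : pred I) (Q : pred J) (f : J -> I) (F : I -> RR) :
  injective f -> (forall j, Q j -> P (f j)) -> (forall i, P i -> 0 <= F i) ->
  \sum_(j | Q j) F (f j) <= \sum_(i | P i) F i.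
Proof.
move=> finj QP F0.
have -> : \sum_(j | Q j) F (f j) = \sum_(i in [set f x | x in Q]) F i.
  by rewrite big_imset //= => x y _ _; apply: finj.
rewrite [X in _ <= X]big_mkcond [X in X <= _]big_mkcond /=.
apply: ler_sum => i _.
case: ifP => Hi.
  case/imsetP: Hi => j Hj ->.
  by rewrite QP.
by case: ifP => // /F0.
Qed.

Definition fcons (U : Type) k (a : U) (x : {ffun 'I_k.+1 -> U}) : {ffun 'I_k.+2 -> U} :=
  [ffun i : 'I_k.+2 => if (i : nat) is j.+1 then x (inord j) else a].

Lemma fconsE (U : Type) k (a : U) (x : {ffun 'I_k.+1 -> U}) m : (m < k.+2)%N ->
  fcons a x (inord m) = if m is j.+1 then x (inord j) else a.
Proof. by move=> Hm; rewrite /fcons ffunE inordK. Qed.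

Lemma fcons_inj (U : Type) k (a b : U) (x y : {ffun 'I_k.+1 -> U}) :
  fcons a x = fcons b y -> a = b /\ x = y.
Proof.
move=> H; split.
  by have := congr1 (fun f : {ffun 'I_k.+2 -> U} => f (inord 0)) H; rewrite !fconsE.
apply/ffunP => i.
have Hi : (i.+1 < k.+2)%N by rewrite ltnS ltn_ord.
have := congr1 (fun f : {ffun 'I_k.+2 -> U} => f (inord i.+1)) H.
by rewrite !fconsE // inord_val.
Qed.


Section Ladder.
Variables (T : finType) (e : rel T).
Hypothesis Hsym : symmetric e.
Hypothesis Hirr : irreflexive e.

Definition old k (x y : {ffun 'I_k.+1 -> T}) : {set T} :=
  [set z | z \in codom x ++ codom y].

Lemma card_old k (x y : {ffun 'I_k.+1 -> T}) : (#|old x y| <= (k.+1).*2)%N.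
Proof.
rewrite /old cardsE (leq_trans (card_size _)) //.
by rewrite size_cat !size_codom card_ord -addnn.
Qed.

Lemma old_x k (x y : {ffun 'I_k.+1 -> T}) i : x i \in old x y.
Proof. by rewrite inE mem_cat codom_f. Qed.
Lemma old_y k (x y : {ffun 'I_k.+1 -> T}) i : y i \in old x y.
Proof. by rewrite inE mem_cat codom_f orbT. Qed.

Lemma copy_ext k (x y : {ffun 'I_k.+1 -> T}) a b :
  ladder_copy e x y -> e a b -> e a (x (inord 0)) -> e b (y (inord 0)) ->
  a \notin old x y -> b \notin old x y ->
  ladder_copy e (fcons a x) (fcons b y).
Proof.
move=> Hc Hab Hax Hby Ha Hb.
have ax i : a != x i by apply: contraNneq Ha => ->; apply: old_x.
have ay i : a != y i by apply: contraNneq Ha => ->; apply: old_y.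
have bx i : b != x i by apply: contraNneq Hb => ->; apply: old_x.
have by' i : b != y i by apply: contraNneq Hb => ->; apply: old_y.
have nab : a != b by apply: contraTneq Hab => ->; rewrite Hirr.
case/and5P: Hc => H1 H2 H3 H4 H5.
apply/and5P; split.
- apply/forallP => -[[|i] Hi]; apply/forallP => -[[|j] Hj]; apply/implyP => Hne;
    rewrite !ffunE /=.
  + by move: Hne; rewrite -val_eqE.
  + exact: ax.
  + by rewrite eq_sym ax.
  + move/forallP: H1 => /(_ (inord i)) /forallP /(_ (inord j)) /implyP; apply.
    by move: Hne; rewrite -!val_eqE /= !inordK.
- apply/forallP => -[[|i] Hi]; apply/forallP => -[[|j] Hj]; apply/implyP => Hne;
    rewrite !ffunE /=.
  + by move: Hne; rewrite -val_eqE.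
  + exact: by'.
  + by rewrite eq_sym by'.
  + move/forallP: H2 => /(_ (inord i)) /forallP /(_ (inord j)) /implyP; apply.
    by move: Hne; rewrite -!val_eqE /= !inordK.
- apply/forallP => -[[|i] Hi]; apply/forallP => -[[|j] Hj]; rewrite !ffunE /=.
  + exact: nab.
  + exact: ay.
  + by rewrite eq_sym bx.
  + by move/forallP: H3 => /(_ (inord i)) /forallP /(_ (inord j)).
- apply/forallP => -[[|i] Hi]; rewrite !ffunE /=; first exact: Hab.
  by move/forallP: H4.
- apply/forallP => -[[|i] Hi]; first by rewrite /= !fconsE //= Hax Hby.
  have Hi' : (i.+1 < k.+2)%N by apply: ltnW.
  rewrite /= !fconsE //.
  by move/forallP: H5 => /(_ (@Ordinal k i Hi)).
Qed.

Lemma weight_ext k (x y : {ffun 'I_k.+1 -> T}) a b :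
  ladder_weight e (fcons a x) (fcons b y) =
  (Num.max ((codeg e a (y (inord 0)))%:R : RR) (avgdeg e ^+ 2 / #|T|%:R))^-1
  * ladder_weight e x y.
Proof.
rewrite /ladder_weight big_ord_recl invfM; congr (_^-1 * _^-1).
  by rewrite !fconsE.
apply: eq_bigr => i _; rewrite lift0 !fconsE //; last first.
all: by have := ltn_ord i; lia.
Qed.

Lemma weight_ge0 k (x y : {ffun 'I_k.+1 -> T}) : 0 <= ladder_weight e x y.
Proof.
rewrite /ladder_weight invr_ge0; apply: prodr_ge0 => i _.
by rewrite le_max ler0n.
Qed.

End Ladder.

Lemma key_ineq (c g D L : RR) : 0 < D -> 512 * L <= D -> 0 <= L -> D / 128 <= c ->
  c <= g + 2 * L -> 1 / 256 <= g * (Num.max c D)^-1.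
Proof.
move=> HD HDL HL Hc Hg.
have HM : 0 < Num.max c D by rewrite lt_max HD orbT.
rewrite -[g * _]/(g / _) ler_pdivlMr //.
have : Num.max c D <= 256 * g by rewrite ge_max; apply/andP; split; lra.
lra.
Qed.

Lemma aux1 (d L s g : RR) : d / 16 <= s -> s <= g + 2 * L -> 64 * L <= d ->
  d / 8192 <= 1 / 256 * g.
Proof. move=> *; lra. Qed.

Lemma aux2 (L : RR) : 1 <= L -> 0 < 512 * L.
Proof. move=> *; lra. Qed.
Lemma aux3 (L : RR) : 1 <= L -> 0 <= L.
Proof. move=> *; lra. Qed.
Lemma aux5 (s g L : RR) : s <= g + L * 2%:R -> s <= g + 2 * L.
Proof. move=> *; lra. Qed.

Section Main.
Variables (T : finType) (e : rel T).
Hypothesis Hsym : symmetric e.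
Hypothesis Hirr : irreflexive e.
Hypothesis Hclean : clean e.
Variable l : nat.
Let n : RR := #|T|%:R.
Let d : RR := avgdeg e.
Let D : RR := d ^+ 2 / n.
Let L : RR := l%:R.
Hypothesis Hn : 0 < n.
Hypothesis Hd : 64 * L <= d.
Hypothesis HD : 512 * L <= D.
Hypothesis Hl : 1 <= L.

Lemma codegC v w : codeg e v w = codeg e w v.
Proof. by rewrite /codeg; apply: eq_card => z; rewrite !inE andbC. Qed.

Definition ext k (q : {ffun 'I_k.+1 -> T} * {ffun 'I_k.+1 -> T}) (p : T * T) :=
  [&& e p.1 p.2, e p.1 (q.1 (inord 0)), e p.2 (q.2 (inord 0)),
      p.1 \notin old q.1 q.2 & p.2 \notin old q.1 q.2].

Definition fac k (q : {ffun 'I_k.+1 -> T} * {ffun 'I_k.+1 -> T}) (a : T) : RR :=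
  (Num.max ((codeg e a (q.2 (inord 0)))%:R : RR) D)^-1.

Lemma fac_ge0 k q a : 0 <= @fac k q a.
Proof. by rewrite /fac invr_ge0 le_max ler0n. Qed.

Lemma inner k (q : {ffun 'I_k.+1 -> T} * {ffun 'I_k.+1 -> T}) :
  (k < l)%N -> ladder_copy e q.1 q.2 ->
  d / 8192 <= \sum_(p | ext q p) fac q p.1.
Proof.
case: q => x y /= Hk Hc.
set u := x (inord 0); set v := y (inord 0).
have Huv : e u v by case/and5P: Hc => _ _ _ /forallP H4 _; apply: H4.
have HS1 := Hclean Huv.
set S1 := [set w | _] in HS1.
set GA := S1 :\: old x y.
pose GB a := [set z | e a z && e v z] :\: old x y.
have Hold : (#|old x y| <= l.*2)%N.
  by apply: (leq_trans (card_old x y)); rewrite leq_double.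
have HGA : #|S1|%:R <= #|GA|%:R + 2 * L.
  have := cardsID (old x y) S1; rewrite -/GA => E.
  have : (#|S1| <= #|GA| + l.*2)%N.
    rewrite -E addnC leq_add2l (leq_trans _ Hold) //.
    by apply: subset_leq_card; apply: subsetIr.
  rewrite -(ler_nat RR) natrD -muln2 natrM => H; exact: aux5 H.
apply: (@le_trans _ _ (\sum_(p | (p.1 \in GA) && (p.2 \in GB p.1)) fac (x, y) p.1)); last first.
  apply: (@sum_inj_le _ _ _ _ id) => //.
  - move=> [a b] /= /andP []; rewrite !inE => /andP [Hao /andP [Hua Hvt]] /andP [Hbo /andP [Hab Hvb]].
    by rewrite /ext /= !inE Hab Hao Hbo (Hsym a u) Hua (Hsym b v) Hvb.
  - by move=> p _; apply: fac_ge0.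
have -> : \sum_(p | (p.1 \in GA) && (p.2 \in GB p.1)) fac (x, y) p.1 =
  \sum_(a in GA) \sum_(b in GB a) fac (x, y) a by rewrite pair_big_dep.
apply: (@le_trans _ _ (\sum_(a in GA) (1 / 256 : RR))).
  rewrite sumr_const -[(1/256) *+ _]mulr_natr.
  have H2 : d / 16 <= (#|S1|%:R : RR) by [].
  have H1 : (#|S1|%:R : RR) <= #|GA|%:R + 2 * L := HGA.
  have H3 : 64 * L <= d := Hd.
  exact: aux1 H2 H1 H3.
apply: ler_sum => a Ha.
rewrite sumr_const -[_ *+ #|GB a|]mulr_natl.
have HDpos : 0 < D by apply: (lt_le_trans _ HD); apply: aux2.
apply: (key_ineq HDpos HD) => //=.
- move: Ha; rewrite !inE => /andP [_ /andP [_ Ht]].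
  rewrite codegC; apply: le_trans Ht.
  by rewrite /D /d -mulrA [_^-1 * _]mulrC -invfM.
- have E := cardsID (old x y) [set z | e a z && e v z].
  have : (codeg e a v <= #|GB a| + l.*2)%N.
    rewrite /codeg -E addnC leq_add2l (leq_trans _ Hold) //.
    by apply: subset_leq_card; apply: subsetIr.
  rewrite -(ler_nat RR) natrD -muln2 natrM => H; exact: aux5 H.
Qed.


Lemma base : n * d <= total_ladder_weight e 0.
Proof.
rewrite /total_ladder_weight.
apply: le_trans (@sum_inj_le _ _ (fun p => ladder_copy e p.1 p.2) (fun p : T * T => e p.1 p.2)
   (fun p => ([ffun _ => p.1], [ffun _ => p.2])) (fun p => ladder_weight e p.1 p.2) _ _ _).
- under eq_bigr do rewrite /ladder_weight /= big_ord0 invr1.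
  have -> : \sum_(j : T * T | e j.1 j.2) (1 : RR) = \sum_(a : T) \sum_(b | e a b) (1 : RR).
    by rewrite pair_big_dep.
  have -> : \sum_(a : T) \sum_(b | e a b) (1 : RR) = \sum_(a : T) (deg e a)%:R.
    apply: eq_bigr => a _.
    rewrite (eq_bigl (fun b => b \in [set b | e a b])); last by move=> b; rewrite inE.
    by rewrite sumr_const.
  rewrite -natr_sum /d /avgdeg -/n mulrC divfK //.
  by rewrite lt0r_neq0.
- move=> [a b] [a' b'] /= [] /ffunP /(_ ord0) Ha /ffunP /(_ ord0) Hb.
  by move: Ha Hb; rewrite !ffunE => -> ->.
- move=> [a b] /= Hab.
  have nab : a != b by apply: contraTneq Hab => ->; rewrite Hirr.
  apply/and5P; split.
  + by apply/forallP => i; apply/forallP => j; rewrite (ord1 i) (ord1 j) eqxx.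
  + by apply/forallP => i; apply/forallP => j; rewrite (ord1 i) (ord1 j) eqxx.
  + by apply/forallP => i; apply/forallP => j; rewrite !ffunE.
  + by apply/forallP => i; rewrite !ffunE.
  + by apply/forallP => -[].
- by move=> p _; apply: weight_ge0.
Qed.

Lemma total_lb k : (k <= l)%N -> n * d * (d / 8192) ^+ k <= total_ladder_weight e k.
Proof.
elim: k => [_|k IH Hk]; first by rewrite expr0 mulr1; apply: base.
have IH' := IH (ltnW Hk).
rewrite /total_ladder_weight.
apply: le_trans (@sum_inj_le _ _ (fun p => ladder_copy e p.1 p.2)
  (fun j : ({ffun 'I_k.+1 -> T} * {ffun 'I_k.+1 -> T}) * (T * T) =>
      ladder_copy e j.1.1 j.1.2 && ext j.1 j.2)
  (fun j => (fcons j.2.1 j.1.1, fcons j.2.2 j.1.2)) (fun p => ladder_weight e p.1 p.2) _ _ _).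
- under eq_bigr do rewrite /= weight_ext.
  have -> : \sum_(j : ({ffun 'I_k.+1 -> T} * {ffun 'I_k.+1 -> T}) * (T * T) |
      ladder_copy e j.1.1 j.1.2 && ext j.1 j.2)
      ((Num.max ((codeg e j.2.1 (j.1.2 (inord 0)))%:R : RR) (avgdeg e ^+ 2 / #|T|%:R))^-1
        * ladder_weight e j.1.1 j.1.2) =
    \sum_(q : {ffun 'I_k.+1 -> T} * {ffun 'I_k.+1 -> T} | ladder_copy e q.1 q.2) \sum_(p | ext q p) (fac q p.1 * ladder_weight e q.1 q.2).
    by rewrite pair_big_dep.
  have Hb : 0 <= d / 8192.
    by apply: divr_ge0 => //; apply: le_trans Hd; apply: mulr_ge0 => //; apply: aux3.
  apply: (@le_trans _ _ (d / 8192 * total_ladder_weight e k)).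
    have -> : n * d * (d / 8192) ^+ k.+1 = d / 8192 * (n * d * (d / 8192) ^+ k).
      by rewrite exprS; ring.
    exact (ler_wpM2l Hb IH').
  rewrite /total_ladder_weight mulr_sumr; apply: ler_sum => q Hq.
  rewrite -mulr_suml mulrC; have Hin := inner Hk Hq.
  apply: le_trans (ler_wpM2r (weight_ge0 e q.1 q.2) Hin); by rewrite mulrC.
- move=> [[x1 y1] [a1 b1]] [[x2 y2] [a2 b2]] /= [] H1 H2.
  case: (fcons_inj H1) => -> ->.
  by case: (fcons_inj H2) => -> ->.
- move=> [[x y] [a b]] /= /andP [Hc]; rewrite /ext /= => /and5P [H1 H2 H3 H4 H5].
  by apply: copy_ext.
- by move=> p _; apply: weight_ge0.
Qed.

End Main.

Lemma aux6 (L s dd nn : RR) : 1 <= L -> 0 <= s -> s ^+ 2 = nn -> 64 * L * s <= dd ->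
  512 * L * nn <= dd ^+ 2.
Proof.
move=> HL Hs Hsn Hd.
have H0 : 0 <= 64 * L * s by apply: mulr_ge0 => //; lra.
have H1 : (64 * L * s) ^+ 2 <= dd ^+ 2 by rewrite ler_pXn2r // ?nnegrE //; lra.
rewrite -Hsn; apply: le_trans H1.
have Hs2 : 0 <= s ^+ 2 by apply: exprn_ge0.
rewrite exprMn; nra.
Qed.

Lemma aux7 (L s dd : RR) : 1 <= L -> 1 <= s -> 64 * L * s <= dd -> 64 * L <= dd.
Proof. move=> HL Hs Hd; apply: le_trans Hd; rewrite -{1}[64 * L]mulr1; apply: ler_wpM2l => //; lra. Qed.

Lemma aux8 (A n d B : RR) : A * n * (d * B) = n * d * (B * A).
Proof. ring. Qed.

Theorem lemma5p3 (l : nat) : (2 <= l)%N ->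
  exists (C c : Rdefinitions.R), 0 < c /\
    forall (T : finType) (e : rel T),
      simple_graph e -> clean e ->
      C * Num.sqrt (#|T|%:R) <= avgdeg e ->
      c * #|T|%:R * avgdeg e ^+ l.+1 <= total_ladder_weight e l.
Proof.
move=> Hl2.
exists (64 * l%:R), ((8192 : RR)^-1 ^+ l); split.
  by apply: exprn_gt0; rewrite invr_gt0.
move=> T e [Hsym Hirr] Hclean HC.
have [Hn0|Hnpos] : #|T| = 0%N \/ (0 < #|T|)%N by case: #|T|; [left|right].
  rewrite Hn0 mulr0n mulr0 mul0r.
  by apply: sumr_ge0 => p _; apply: weight_ge0.
have Hn : 0 < (#|T|%:R : RR) by rewrite ltr0n.
have Hl : 1 <= (l%:R : RR).
  have : (1%:R : RR) <= l%:R by rewrite ler_nat; apply: leq_trans Hl2.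
  by [].
have Hs1 : 1 <= Num.sqrt (#|T|%:R : RR).
  have H1 : (1%:R : RR) <= #|T|%:R by rewrite ler_nat.
  have : Num.sqrt (1 : RR) <= Num.sqrt (#|T|%:R) by rewrite ler_sqrt.
  by rewrite sqrtr1.
have Hd : 64 * l%:R <= avgdeg e := aux7 Hl Hs1 HC.
have HD : 512 * l%:R <= avgdeg e ^+ 2 / #|T|%:R.
  rewrite ler_pdivlMr //.
  apply: aux6 Hl _ _ HC; first exact: sqrtr_ge0.
  by rewrite sqr_sqrtr // ltW.
have := total_lb Hsym Hirr Hclean Hn Hd HD Hl (leqnn l).
have -> : (8192 : RR)^-1 ^+ l * #|T|%:R * avgdeg e ^+ l.+1 =
  #|T|%:R * avgdeg e * (avgdeg e / 8192) ^+ l.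
  by move: (avgdeg e) => dd; rewrite exprMn exprS aux8.
by [].
Qed.
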